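(* For any sign string and state string, the web produced by the growth algorithm is non-elliptic, i.e. it contains no closed loops and every internal face has at least six sides.
   Context: A sign string is $S=(s_1,\dots,s_n)\in\{+,-\}^n$ and a state string is $J=(j_1,\dots,j_n)\in\{-1,0,1\}^n$. The growth algorithm builds an oriented planar graph downward from $n$ parallel strands (the $k$-th strand oriented upward toward its top endpoint if $s_k=+$ and downward if $s_k=-$), keeping a current pair (sign string, state string) describing the strands hanging at the bottom. A replacement acts on two adjacent positions $k,k+1$ with current signs $(s,s')$ and states $(j,j')$: (a) If $s'\ne s$: if $(j,j')=(1,0)$, $(0,0)$ or $(0,-1)$, attach an ''H'' (two trivalent vertices joined by a horizontal edge, the left vertex joined to strand $k$ above and to a new strand below, the right vertex likewise for strand $k+1$); the new signs at positions $k,k+1$ are $(s',s)$ and the new states are respectively $(0,1)$, $(-1,1)$, $(-1,0)$. If $(j,j')=(1,-1)$, join the two strands by a cup and delete both positions. (b) If $s'=s$: if $(j,j')=(1,0)$, $(0,-1)$ or $(1,-1)$, attach a ''Y'' (the two strands meet at a trivalent vertex whose third edge continues downward as a single strand); the two positions are replaced by one position with sign opposite to $s$ and state respectively $1$, $-1$, $0$. The algorithm repeatedly applies some applicable replacement and stops when none applies. An internal face of the resulting graph is a bounded complementary region not touching the top line of endpoints or the strands left hanging at the bottom. *)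

(* Defs.v *)
From Stdlib Require List.
From mathcomp Require Import all_boot.

Set Implicit Arguments.
Unset Strict Implicit.
Unset Printing Implicit Defensive.

Inductive sgn : Type := Plus | Minus.

Definition opp_sgn (s : sgn) : sgn := match s with Plus => Minus | Minus => Plus end.

(** States j_k in {-1,0,1}. *)
Inductive st : Type := Jm | J0 | Jp .

(** A region (complementary component of the partially built web) that is
    currently open, or a face that has been closed off.
    [corners] = number of (trivalent-vertex) corners on its boundary so far,
    i.e. the number of sides once the face is closed;
    [top] = whether the region touches the top line of endpoints. *)
Record region : Type := Region { corners : nat; top : bool }.

Definition addc (r : region) (m : nat) : region := Region (corners r + m) (top r).
Definition merge (l r : region) : region :=
  Region (corners l + corners r) (top l || top r).

(** Current state of the growth algorithm:
    - [strands]: the (sign, state) pairs of the strands hanging at the bottom,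
      from left to right;
    - [regions]: the open regions between/around these strands, from left to
      right (one more than the number of strands);
    - [faces]: the faces that have been closed off so far. *)
Record config : Type := Config {
  strands : seq (prod sgn st);
  regions : seq region;
  faces : seq region }.

Definition H_rule (j j' : st) : option (st * st) :=
  match j, j' with
  | Jp, J0 => Some (J0, Jp)
  | J0, J0 => Some (Jm, Jp)
  | J0, Jm => Some (Jm, J0)
  | _, _ => None
  end.

Definition Y_rule (j j' : st) : option st :=
  match j, j' with
  | Jp, J0 => Some Jp
  | J0, Jm => Some Jm
  | Jp, Jm => Some J0
  | _, _ => None
  end.

(** One replacement acting at adjacent positions k, k+1 (k = size a).
    The regions to the left of strand k, between strands k and k+1, and to
    the right of strand k+1 are L, M, R.
    - H: left vertex has corners in L, M and the new region below the
      horizontal edge; right vertex in M, the new region and R.  M is closed.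
    - cup: M is closed (no new corner); L and R become one region.
    - Y: the vertex has corners in L, M, R; M is closed. *)
Inductive step : config -> config -> Prop :=
| step_H : forall a b ra rb s s' j j' t t' L M R F,
    size ra = size a -> s <> s' -> H_rule j j' = Some (t, t') ->
    step (Config (a ++ (s, j) :: (s', j') :: b) (ra ++ L :: M :: R :: rb) F)
         (Config (a ++ (s', t) :: (s, t') :: b)
                 (ra ++ addc L 1 :: Region 2 false :: addc R 1 :: rb)
                 (rcons F (addc M 2)))
| step_cup : forall a b ra rb s s' L M R F,
    size ra = size a -> s <> s' ->
    step (Config (a ++ (s, Jp) :: (s', Jm) :: b) (ra ++ L :: M :: R :: rb) F)
         (Config (a ++ b) (ra ++ merge L R :: rb) (rcons F M))
| step_Y : forall a b ra rb s j j' t L M R F,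
    size ra = size a -> Y_rule j j' = Some t ->
    step (Config (a ++ (s, j) :: (s, j') :: b) (ra ++ L :: M :: R :: rb) F)
         (Config (a ++ (opp_sgn s, t) :: b)
                 (ra ++ addc L 1 :: addc R 1 :: rb)
                 (rcons F (addc M 1))).

Inductive reach : config -> config -> Prop :=
| reach_refl : forall c, reach c c
| reach_step : forall c1 c2 c3, step c1 c2 -> reach c2 c3 -> reach c1 c3.

Definition terminal (c : config) : Prop := forall c', ~ step c c'.

Definition init (S : seq sgn) (J : seq st) : config :=
  Config (zip S J) (nseq (size S).+1 (Region 0 true)) [::].

(** Internal face: a closed-off (bounded) region not touching the top line
    (closed-off regions never touch the bottom strands). *)
Definition internal_face (c : config) (f : region) : Prop :=
  List.In f (faces c) /\ top f = false.

(** Non-elliptic: every internal face has at least six sides.  (Closed loops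
    cannot even be represented.) *)
Definition non_elliptic (c : config) : Prop :=
  forall f, internal_face c f -> 6 <= corners f.

(* Main.v *)
Require Import Defs.
From mathcomp Require Import all_boot.
From mathcomp Require Import zify.

Definition wa (j : st) : nat := match j with Jp => 0 | J0 => 1 | Jm => 2 end.
Definition wb (j : st) : nat := match j with Jm => 0 | J0 => 1 | Jp => 2 end.
Definition sdiff (s s' : sgn) : nat :=
  match s, s' with Plus, Minus | Minus, Plus => 1 | _, _ => 0 end.
Definition ok_mid (x y : sgn * st) (r : region) : bool :=
  (5 <= corners r + wa x.2 + wb y.2) && ((corners r + sdiff x.1 y.1) %% 2 == 1).
Definition ok (po qo : option (sgn * st)) (r : region) : bool :=
  top r || match po, qo with Some x, Some y => ok_mid x y r | _, _ => false end.

Fixpoint chk (po : option (sgn * st)) (ss : seq (sgn * st)) (rs : seq region) : bool :=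
  match ss, rs with
  | y :: ss', r :: rs' => ok po (Some y) r && chk (Some y) ss' rs'
  | [::], [:: r] => ok po None r
  | _, _ => false
  end.

Fixpoint chkp (po : option (sgn * st)) (ss : seq (sgn * st)) (rs : seq region) : bool :=
  match ss, rs with
  | y :: ss', r :: rs' => ok po (Some y) r && chkp (Some y) ss' rs'
  | [::], [::] => true
  | _, _ => false
  end.

Lemma chk_cat po a ra s rs : size ra = size a ->
  chk po (a ++ s) (ra ++ rs) = chkp po a ra && chk (last po (map Some a)) s rs.
Proof.
elim: a po ra => [|x a IH] po [|r ra] //= [] Hs.
by rewrite IH // andbA.
Qed.

Definition tchk (b : seq (sgn * st)) (rb : seq region) : bool :=
  match b with [::] => (if rb is [::] then true else false) | z :: b' => chk (Some z) b' rb end.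

Lemma chk_tail q b R rb : chk q b (R :: rb) = ok q (ohead b) R && tchk b rb.
Proof. case: b => [|z b] /=; case: rb => //= *; by rewrite ?andbT ?andbF. Qed.

Lemma top_ok po qo r : top r = true -> ok po qo r.
Proof. by rewrite /ok => ->. Qed.

Ltac brute := repeat match goal with
  | s : sgn |- _ => case: s
  | s : st |- _ => case: s
  end.

Lemma okL_H p s s' j j' t t' L : s <> s' -> H_rule j j' = Some (t, t') ->
  ok p (Some (s, j)) L -> ok p (Some (s', t)) (addc L 1).
Proof.
case: L => c [] //= Hs HH; case: p => [[xs xj]|] //=.
rewrite /ok_mid /=; move=> /andP[h1 /eqP h2]; apply/andP; split; last apply/eqP;
move: HH Hs h1 h2; case: j j' => [] [] //=; case=> ? ?; subst; brute => //=; lia.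
Qed.

Lemma okR_H q s s' j j' t t' R : s <> s' -> H_rule j j' = Some (t, t') ->
  ok (Some (s', j')) q R -> ok (Some (s, t')) q (addc R 1).
Proof.
case: R => c [] //= Hs HH; case: q => [[xs xj]|] //=.
rewrite /ok_mid /=; move=> /andP[h1 /eqP h2]; apply/andP; split; last apply/eqP;
move: HH Hs h1 h2; case: j j' => [] [] //=; case=> ? ?; subst; brute => //=; lia.
Qed.

Lemma okM_H s s' j j' t t' M : s <> s' -> H_rule j j' = Some (t, t') ->
  ok (Some (s, j)) (Some (s', j')) M -> top M = false -> 6 <= corners (addc M 2).
Proof.
case: M => c [] //= Hs HH; rewrite /ok_mid /= => /andP[h1 /eqP h2] _.
move: HH Hs h1 h2; brute => //= _ _; lia.
Qed.

Lemma okN_H s s' j j' t t' : s <> s' -> H_rule j j' = Some (t, t') ->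
  ok (Some (s', t)) (Some (s, t')) (Region 2 false).
Proof.
move=> Hs HH; rewrite /ok /ok_mid /=.
move: HH Hs; case: j j' => [] [] //=; case=> ? ?; subst; brute => //=.
Qed.

Lemma ok_cup p q s s' (Lr Rr : region) : s <> s' ->
  ok p (Some (s, Jp)) Lr -> ok (Some (s', Jm)) q Rr -> ok p q (Defs.merge Lr Rr).
Proof.
move=> Hs; case: Lr => c [] /=; first by rewrite /ok /=.
case: Rr => d [] /=; first by rewrite /ok /= ?orbT.
rewrite /ok /=.
case: p => [[xs xj]|] //=; case: q => [[ys yj]|] //=.
rewrite /ok_mid /= => /andP[h1 /eqP h2] /andP[h3 /eqP h4]; apply/andP; split; last apply/eqP;
move: Hs h1 h2 h3 h4; brute => //= _; lia.
Qed.

Lemma okM_cup s s' M : s <> s' ->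
  ok (Some (s, Jp)) (Some (s', Jm)) M -> top M = false -> 6 <= corners M.
Proof.
case: M => c [] //= Hs; rewrite /ok_mid /= => /andP[h1 /eqP h2] _.
move: Hs h1 h2; brute => //= _; lia.
Qed.

Lemma okL_Y p s j j' t L : Y_rule j j' = Some t ->
  ok p (Some (s, j)) L -> ok p (Some (opp_sgn s, t)) (addc L 1).
Proof.
case: L => c [] //= HH; case: p => [[xs xj]|] //=.
rewrite /ok_mid /=; move=> /andP[h1 /eqP h2]; apply/andP; split; last apply/eqP;
move: HH h1 h2; case: j j' => [] [] //=; case=> ?; subst; brute => //=; lia.
Qed.

Lemma okR_Y q s j j' t R : Y_rule j j' = Some t ->
  ok (Some (s, j')) q R -> ok (Some (opp_sgn s, t)) q (addc R 1).
Proof.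
case: R => c [] //= HH; case: q => [[xs xj]|] //=.
rewrite /ok_mid /=; move=> /andP[h1 /eqP h2]; apply/andP; split; last apply/eqP;
move: HH h1 h2; case: j j' => [] [] //=; case=> ?; subst; brute => //=; lia.
Qed.

Lemma okM_Y s j j' t M : Y_rule j j' = Some t ->
  ok (Some (s, j)) (Some (s, j')) M -> top M = false -> 6 <= corners (addc M 1).
Proof.
case: M => c [] //= HH; rewrite /ok_mid /= => /andP[h1 /eqP h2] _.
move: HH h1 h2; brute => //= _; lia.
Qed.

Lemma in_rcons (F : seq region) m f : List.In f (rcons F m) -> List.In f F \/ f = m.
Proof.
elim: F => [|x F IH] /=; first by case=> [->|[]]; right.
case=> [->|/IH [h|h]]; by [left; left | left; right | right].
Qed.

Definition faces_ok (F : seq region) : Prop :=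
  forall f, List.In f F -> top f = false -> 6 <= corners f.

Definition Inv (c : config) : Prop :=
  chk None (strands c) (regions c) /\ faces_ok (faces c).

Lemma faces_rcons F m : faces_ok F -> (top m = false -> 6 <= corners m) ->
  faces_ok (rcons F m).
Proof. by move=> HF Hm f /in_rcons [h|->]; [apply: HF|]. Qed.

Arguments okL_H {p s s' j j' t t' L}.
Arguments okR_H {q s s' j j' t t' R}.
Arguments okM_H {s s' j j' t t' M}.
Arguments okN_H {s s' j j' t t'}.
Arguments ok_cup {p q s s' Lr Rr}.
Arguments okM_cup {s s' M}.
Arguments okL_Y {p s j j' t L}.
Arguments okR_Y {q s j j' t R}.
Arguments okM_Y {s j j' t M}.

Lemma step_inv c c' : step c c' -> Inv c -> Inv c'.
Proof.
case=> {c c'}.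
- move=> a b ra rb s s' j j' t t' L M R F Hsz Hs HH; rewrite /Inv /= => -[].
  rewrite !chk_cat // /= !chk_tail => /andP[-> /and4P[hL hM hR ->]] HF.
  split; last first.
    apply: faces_rcons => //; exact: okM_H Hs HH hM.
  by rewrite (okL_H Hs HH hL) (okN_H Hs HH) (okR_H Hs HH hR).
- move=> a b ra rb s s' L M R F Hsz Hs; rewrite /Inv /= => -[].
  rewrite !chk_cat // /= !chk_tail => /andP[-> /and4P[hL hM hR ht]] HF.
  split; last first.
    apply: faces_rcons => //; exact: okM_cup Hs hM.
  by rewrite (ok_cup Hs hL hR).
- move=> a b ra rb s j j' t L M R F Hsz HY; rewrite /Inv /= => -[].
  rewrite !chk_cat // /= !chk_tail => /andP[-> /and4P[hL hM hR ->]] HF.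
  split; last first.
    apply: faces_rcons => //; exact: okM_Y HY hM.
  by rewrite (okL_Y HY hL) (okR_Y HY hR).
Qed.

Lemma reach_inv c c' : reach c c' -> Inv c -> Inv c'.
Proof. by elim=> // c1 c2 c3 H _ IH /(@step_inv _ _ H). Qed.

Lemma chk_init po ss : chk po ss (nseq (size ss).+1 (Region 0 true)).
Proof. by elim: ss po => [|x ss IH] po //=; rewrite IH. Qed.

Theorem lemma3 (S : seq sgn) (J : seq st) (c : config) :
  size S = size J -> reach (init S J) c -> terminal c -> non_elliptic c.
Proof.
move=> HSJ Hr _.
have [_ HF] : Inv c.
  apply: (@reach_inv _ _ Hr); split => //=.
  have -> : size S = size (zip S J) by rewrite size_zip HSJ minnn.
  exact: chk_init.
by move=> f [Hin Ht]; apply: HF.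
Qed.
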